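(* Let $u$ be a minimizer of the problem $\min f(x)$ s.t. $G(x)\succeq 0$, and suppose the nondegeneracy condition, the strict complementarity condition and the second order sufficient condition hold at $u$. Then there exists $\Theta \in \mathcal{S}^{m-r}$ such that \[ \nabla L^{re}(u) = 0, \qquad \Theta \succeq 0,\quad T(u)\succeq 0, \qquad \langle \Theta, T(u)\rangle = 0, \] where $L^{re}(x) := f(x) - \langle \Theta, T(x)\rangle$. Furthermore: (i) the linear mapping $\nabla T(u)$ is regular, i.e. $\ker \nabla T(u)^* = \{0\}\subset \mathcal{S}^{m-r}$; (ii) $\Theta \succ 0$; (iii) for all $0 \neq h \in \ker \nabla T(u)$, $h^T \nabla^2 L^{re}(u)\, h > 0$.
   Context: Let $f\in\mathbb{R}[x]$, $x=(x_1,\dots,x_n)$, and let $G(x)$ be an $m\times m$ symmetric polynomial matrix; consider $\min f(x)$ s.t. $G(x)\succeq 0$. $\mathcal{S}^k$ denotes the $k\times k$ real symmetric matrices. For a matrix polynomial $F$, $\nabla F(x)[d]=\sum_i d_i \nabla_{x_i}F(x)$ and its adjoint is $\nabla F(x)^*[X]=(\langle \nabla_{x_1}F(x),X\rangle,\dots,\langle \nabla_{x_n}F(x),X\rangle)^T$. Nondegeneracy condition at feasible $u$: $\operatorname{Im}\nabla G(u) + \{N\in\mathcal{S}^m : E^TNE=0\} = \mathcal{S}^m$, where the columns of $E$ form a basis of $\ker G(u)$. Under it there is a unique $\Lambda\in\mathcal{S}^m$ with $\nabla f(u)-\nabla G(u)^*[\Lambda]=0$, $\Lambda\succeq 0$,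 $G(u)\succeq0$, $\langle\Lambda,G(u)\rangle=0$. Strict complementarity condition: $\operatorname{rank}G(u)+\operatorname{rank}\Lambda=m$. Second order sufficient condition: $h^T(\nabla^2 L(u,\Lambda)+H(u,\Lambda))h>0$ for all nonzero $h\in\{h\in\mathbb{R}^n:\sum_i h_i E^T\nabla_{x_i}G(u)E=0\}$, where $L(x,\Lambda)=f(x)-\langle\Lambda,G(x)\rangle$ and $H(x,Q)_{ij}=2\langle Q,\nabla_{x_i}G(x)\,G(x)^{\dagger}\,\nabla_{x_j}G(x)\rangle$ ($\dagger$ = Moore–Penrose inverse). Let $r=\operatorname{rank}G(u)$. Up to a permutation of rows and columns write $G=\begin{bmatrix}A & B\\ B^T & C\end{bmatrix}$ with $A\in\mathcal{S}^r\mathbb{R}[x]$ and $\operatorname{rank}A(u)=r$. Set $p(x)=\det A(x)$, $S(x)=C(x)-B(x)^TA(x)^{-1}B(x)$ (Schur complement, defined near $u$), and $T(x)=p(x)^2S(x)$, which is an $(m-r)\times(m-r)$ symmetric polynomial matrix (since $pA^{-1}$ is the adjugate of $A$), with $T(u)=0$; near $u$, $G(x)\succeq0$ iff $T(x)\succeq0$. *)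

(* Defs.v *)
From HB Require Import structures.
From mathcomp Require Import all_boot all_order all_algebra all_fingroup.
From mathcomp Require Import reals.
From mathcomp Require Import mpoly.
Set Implicit Arguments. Unset Strict Implicit. Unset Printing Implicit Defensive.
Import Order.TTheory GRing.Theory Num.Theory.
Local Open Scope ring_scope.

Section PMO.
Variables (R : realType) (n : nat).

Definition frob (p q : nat) (X Y : 'M[R]_(p, q)) : R := \tr (X^T *m Y).

Definition psd (m : nat) (A : 'M[R]_m) : Prop :=
  A^T = A /\ forall v : 'cV[R]_m, 0 <= (v^T *m A *m v) 0 0.
Definition pd (m : nat) (A : 'M[R]_m) : Prop :=
  A^T = A /\ forall v : 'cV[R]_m, v != 0 -> 0 < (v^T *m A *m v) 0 0.

Definition is_MP_inverse (p q : nat) (A : 'M[R]_(p, q)) (X : 'M[R]_(q, p)) : Prop :=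
  [/\ A *m X *m A = A, X *m A *m X = X, (A *m X)^T = A *m X & (X *m A)^T = X *m A].

Definition evalmx (p q : nat) (x : 'I_n -> R) (M : 'M[{mpoly R[n]}]_(p, q)) : 'M[R]_(p, q) :=
  map_mx (meval x) M.

Definition dmx (p q : nat) (i : 'I_n) (M : 'M[{mpoly R[n]}]_(p, q)) : 'M[{mpoly R[n]}]_(p, q) :=
  map_mx (mderiv i) M.

Definition grad (f : {mpoly R[n]}) (x : 'I_n -> R) : 'cV[R]_n :=
  \col_i meval x (mderiv i f).

Definition hess (f : {mpoly R[n]}) (x : 'I_n -> R) : 'M[R]_n :=
  \matrix_(i, j) meval x (mderiv j (mderiv i f)).

Definition Dmx (p : nat) (F : 'M[{mpoly R[n]}]_p) (x : 'I_n -> R) (d : 'cV[R]_n) : 'M[R]_p :=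
  \sum_i d i 0 *: evalmx x (dmx i F).

Definition Dmx_adj (p : nat) (F : 'M[{mpoly R[n]}]_p) (x : 'I_n -> R) (X : 'M[R]_p) : 'cV[R]_n :=
  \col_i frob (evalmx x (dmx i F)) X.

Definition hessL (p : nat) (f : {mpoly R[n]}) (F : 'M[{mpoly R[n]}]_p) (x : 'I_n -> R)
  (Q : 'M[R]_p) : 'M[R]_n :=
  hess f x - \matrix_(i, j) frob Q (evalmx x (dmx j (dmx i F))).

(* H(x,Q)_{ij} = 2 <Q, nabla_{x_i}F(x) F(x)^dagger nabla_{x_j}F(x)>, Fdag = F(x)^dagger *)
Definition Hterm (p : nat) (F : 'M[{mpoly R[n]}]_p) (x : 'I_n -> R) (Q Fdag : 'M[R]_p)
  : 'M[R]_n :=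
  \matrix_(i, j) (2 * frob Q (evalmx x (dmx i F) *m Fdag *m evalmx x (dmx j F))).

Definition feasible (p : nat) (F : 'M[{mpoly R[n]}]_p) (x : 'I_n -> R) : Prop :=
  psd (evalmx x F).
Definition is_minimizer (p : nat) (f : {mpoly R[n]}) (F : 'M[{mpoly R[n]}]_p)
  (u : 'I_n -> R) : Prop :=
  feasible F u /\ forall x, feasible F x -> meval u f <= meval x f.

(* columns of E form a basis of ker A (column kernel A v = 0) *)
Definition ker_basis (p d : nat) (A : 'M[R]_p) (E : 'M[R]_(p, d)) : Prop :=
  row_free E^T /\ (E^T == kermx A^T)%MS.

Definition nondegeneracy_cond (p d : nat) (F : 'M[{mpoly R[n]}]_p) (u : 'I_n -> R)
  (E : 'M[R]_(p, d)) : Prop :=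
  forall X : 'M[R]_p, X^T = X ->
    exists (dd : 'cV[R]_n) (N : 'M[R]_p),
      [/\ N^T = N, E^T *m N *m E = 0 & X = Dmx F u dd + N].

Definition KKT (p : nat) (f : {mpoly R[n]}) (F : 'M[{mpoly R[n]}]_p) (u : 'I_n -> R)
  (Lam : 'M[R]_p) : Prop :=
  [/\ Lam^T = Lam, grad f u - Dmx_adj F u Lam = 0, psd Lam, psd (evalmx u F)
    & frob Lam (evalmx u F) = 0].

Definition strict_compl (p : nat) (F : 'M[{mpoly R[n]}]_p) (u : 'I_n -> R)
  (Lam : 'M[R]_p) : Prop :=
  (\rank (evalmx u F) + \rank Lam)%N = p.

Definition SOSC (p d : nat) (f : {mpoly R[n]}) (F : 'M[{mpoly R[n]}]_p) (u : 'I_n -> R)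
  (Lam : 'M[R]_p) (E : 'M[R]_(p, d)) (Fdag : 'M[R]_p) : Prop :=
  forall h : 'cV[R]_n, h != 0 ->
    \sum_i h i 0 *: (E^T *m evalmx u (dmx i F) *m E) = 0 ->
    0 < (h^T *m (hessL f F u Lam + Hterm F u Lam Fdag) *m h) 0 0.

Definition symperm (p : nat) (s : 'S_p) (G : 'M[{mpoly R[n]}]_p) : 'M[{mpoly R[n]}]_p :=
  \matrix_(i, j) G (s i) (s j).

(* T = p^2 (C - B^T A^{-1} B) = det(A)^2 C - det(A) B^T adj(A) B,
   where s G s^T = [A B; B^T C] with A of size r *)
Definition Tmx (r k : nat) (s : 'S_(r + k)) (G : 'M[{mpoly R[n]}]_(r + k))
  : 'M[{mpoly R[n]}]_k :=
  let Gp := symperm s G in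
  let A := ulsubmx Gp in let B := ursubmx Gp in let C := drsubmx Gp in
  (\det A) ^+ 2 *: C - \det A *: (B^T *m \adj A *m B).

End PMO.

(* Main.v *)
Require Import Defs.
From HB Require Import structures.
From mathcomp Require Import all_boot all_order all_algebra all_fingroup.
From mathcomp Require Import reals.
From mathcomp Require Import mpoly.
From mathcomp Require Import ring lra.
Set Implicit Arguments. Unset Strict Implicit. Unset Printing Implicit Defensive.
Import Order.TTheory GRing.Theory Num.Theory.
Local Open Scope ring_scope.
Lemma frobC (R : realType) p q (X Y : 'M[R]_(p, q)) : frob X Y = frob Y X.
Proof. by rewrite /frob -mxtrace_tr trmx_mul trmxK. Qed.

Lemma frobE (R : realType) p q (X Y : 'M[R]_(p, q)) :
  frob X Y = \sum_i \sum_j X i j * Y i j.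
Proof.
rewrite /frob /mxtrace exchange_big /=; apply: eq_bigr => j _; rewrite mxE.
by apply: eq_bigr => i _; rewrite mxE.
Qed.

Lemma frob_self0 (R : realType) p q (X : 'M[R]_(p, q)) : frob X X = 0 -> X = 0.
Proof.
rewrite frobE => /eqP; rewrite psumr_eq0 => [/allP H|i _]; last first.
  by apply: sumr_ge0 => j _; rewrite -expr2 sqr_ge0.
apply/matrixP => i j; rewrite mxE.
have := H i (mem_index_enum _).
rewrite psumr_eq0 => [/allP H2|j' _]; last by rewrite -expr2 sqr_ge0.
by have := H2 j (mem_index_enum _); rewrite mulf_eq0 orbb => /eqP.
Qed.

Lemma frobDr (R : realType) p q (X Y Z : 'M[R]_(p, q)) :
  frob X (Y + Z) = frob X Y + frob X Z.
Proof. by rewrite /frob mulmxDr mxtraceD. Qed.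

Lemma frobZr (R : realType) p q (X Y : 'M[R]_(p, q)) c :
  frob X (c *: Y) = c * frob X Y.
Proof. by rewrite /frob -scalemxAr mxtraceZ. Qed.

Lemma frobNr (R : realType) p q (X Y : 'M[R]_(p, q)) :
  frob X (- Y) = - frob X Y.
Proof. by rewrite /frob mulmxN; exact: raddfN. Qed.

Lemma frob0r (R : realType) p q (X : 'M[R]_(p, q)) : frob X 0 = 0.
Proof. by rewrite /frob mulmx0; exact: raddf0. Qed.

Lemma frob_sumr (R : realType) p q (X : 'M[R]_(p, q)) (I : finType) (F : I -> 'M[R]_(p, q)) :
  frob X (\sum_i F i) = \sum_i frob X (F i).
Proof.
rewrite /frob mulmx_sumr /mxtrace.
rewrite exchange_big /=; apply: eq_bigr => j _; by rewrite summxE.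
Qed.

Lemma frob_congr (R : realType) a b (V : 'M[R]_(a, b)) X Y :
  frob (V^T *m X *m V) Y = frob X (V *m Y *m V^T).
Proof.
by rewrite /frob !trmx_mul !trmxK -!mulmxA mxtrace_mulC !mulmxA.
Qed.

Lemma qform_sym (R : realType) m (M : 'M[R]_m) (v w : 'cV[R]_m) : M^T = M ->
 (v^T *m M *m w) 0 0 = (w^T *m M *m v) 0 0.
Proof.
move=> Ms.
have -> : (v^T *m M *m w) 0 0 = (v^T *m M *m w)^T 0 0 by rewrite [RHS]mxE.
by rewrite !trmx_mul trmxK Ms mulmxA.
Qed.

Lemma psd_null (R : realType) m (M : 'M[R]_m) (v : 'cV[R]_m) :
  psd M -> (v^T *m M *m v) 0 0 = 0 -> M *m v = 0.
Proof.
move=> [Ms Mp] h0.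
have key : forall w : 'cV[R]_m, (w^T *m M *m v) 0 0 = 0.
  move=> w; set b := (w^T *m M *m v) 0 0; set c := (w^T *m M *m w) 0 0.
  have hc : 0 <= c by apply: Mp.
  have hvw : (v^T *m M *m w) 0 0 = b.
    by rewrite /b qform_sym.
  have H t : 0 <= 2 * t * b + t ^+ 2 * c.
    have := Mp (v + t *: w).
    have -> : (v + t *: w)^T = v^T + t *: w^T by apply/matrixP => i j; rewrite !mxE.
    rewrite !mulmxDl !mulmxDr -!(scalemxAl t) -!(scalemxAr t).
    move: h0 hvw; rewrite /b /c.
    set P1 := v^T *m M *m v; set P2 := v^T *m M *m w.
    set P3 := w^T *m M *m v; set P4 := w^T *m M *m w.
    rewrite !mxE => -> ->; move=> HH; lra.
  have hc1 : 0 < c + 1 by lra.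
  pose t := - b / (c + 1).
  have Ht := H t.
  have E : 2 * t * b + t ^+ 2 * c = - (b ^+ 2 * (c + 2)) * ((c + 1) ^+ 2)^-1.
    by rewrite /t; field; rewrite gt_eqF.
  rewrite E pmulr_lge0 in Ht; last by rewrite invr_gt0 exprn_gt0.
  apply/eqP; rewrite -sqrf_eq0 eq_le sqr_ge0 andbT; nra.
have K := key (M *m v); apply: frob_self0.
by rewrite /frob trace_mx11 mulmxA.
Qed.
Lemma qform_expand (R : realType) m (M : 'M[R]_m) (v w : 'cV[R]_m) (t : R) :
  ((v + t *: w)^T *m M *m (v + t *: w)) 0 0 =
  (v^T *m M *m v) 0 0 + t * (v^T *m M *m w) 0 0 + t * (w^T *m M *m v) 0 0
  + t ^+ 2 * (w^T *m M *m w) 0 0.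
Proof.
have -> : (v + t *: w)^T = v^T + t *: w^T by apply/matrixP => i j; rewrite !mxE.
rewrite !mulmxDl !mulmxDr -!(scalemxAl t) -!(scalemxAr t).
set P1 := v^T *m M *m v; set P2 := v^T *m M *m w.
set P3 := w^T *m M *m v; set P4 := w^T *m M *m w.
rewrite !mxE; ring.
Qed.

Lemma psd_block0 (R : realType) m (N : 'M[R]_(1 + m)) :
  psd N -> N *m col_mx 1%:M 0 = 0 ->
  N = block_mx 0 0 0 (drsubmx N) /\ psd (drsubmx N).
Proof.
move=> [Ns Np] Ne.
have Hul : ulsubmx N = 0 /\ dlsubmx N = 0.
  move: Ne; rewrite -[in LHS](submxK N) mul_block_col !mulmx1 !mulmx0 !addr0.
  by rewrite -col_mx0 => /eq_col_mx [-> ->].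
have Hur : ursubmx N = 0.
  by rewrite -[N in ursubmx N]Ns -trmx_dlsub Hul.2 trmx0.
have EN : N = block_mx 0 0 0 (drsubmx N).
  by rewrite -[N in LHS]submxK Hul.1 Hul.2 Hur.
split => //; split; first by rewrite trmx_drsub Ns.
move=> v; have := Np (col_mx 0 v).
rewrite [in X in X -> _]EN tr_col_mx trmx0 mul_row_block !mulmx0 !addr0 !add0r.
by rewrite mul_row_col mulmx0 add0r.
Qed.

Lemma psd_factor (R : realType) m (M : 'M[R]_m) :
  psd M -> exists Q : 'M[R]_m, M = Q *m Q^T.
Proof.
elim: m M => [|m IH] M hM.
  by exists 0; apply/matrixP => i; case: i.
suff step : forall M' : 'M[R]_(1 + m), psd M' -> exists Q : 'M[R]_(1 + m), M' = Q *m Q^T.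
  exact: step.
clear M hM => M hM.
have [Ms Mp] := hM.
pose e0 : 'cV[R]_(1 + m) := col_mx 1%:M 0.
pose c := M *m e0.
pose a := (e0^T *m M *m e0) 0 0.
have a0 : 0 <= a by apply: Mp.
have cTe0 : c^T *m e0 = a%:M.
  apply/matrixP => i j; rewrite !ord1 [RHS]mxE eqxx mulr1n /c /a trmx_mul.
  by rewrite Ms.
have ha : a = 0 -> c = 0 by move=> h; apply: psd_null.
pose x := Num.sqrt a^-1 *: c.
have xxT : x *m x^T = a^-1 *: (c *m c^T).
  rewrite /x linearZ /= -scalemxAl -scalemxAr scalerA -expr2 sqr_sqrtr //.
  by rewrite invr_ge0.
pose N := M - x *m x^T.
have NT : N^T = N.
  rewrite /N linearD /= linearN /= trmx_mul trmxK; congr (_ - _); exact: Ms.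
have Ne : N *m e0 = 0.
  rewrite /N mulmxBl xxT -scalemxAl -mulmxA cTe0 mul_mx_scalar scalerA -/c.
  have [a00|anz] := eqVneq a 0.
    by rewrite ha // scaler0 subr0.
  by rewrite mulVf // scale1r subrr.
have Npsd : psd N.
  split => // v.
  have [a00|anz] := eqVneq a 0.
    by rewrite /N xxT a00 invr0 scale0r subr0; apply: Mp.
  pose b := (c^T *m v) 0 0.
  have := Mp (v + (- (b / a)) *: e0); rewrite qform_expand.
  have E2 : (e0^T *m M *m v) 0 0 = b.
    by rewrite /b /c trmx_mul Ms.
  have E1 : (v^T *m M *m e0) 0 0 = b by rewrite qform_sym.
  rewrite E1 E2 -/a.
  have -> : (v^T *m N *m v) 0 0 = (v^T *m M *m v) 0 0 - a^-1 * b ^+ 2.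
    have vc : (v^T *m c) 0 0 = b by rewrite /b -{1}(trmxK c) -trmx_mul mxE.
    rewrite /N mulmxBr mulmxBl xxT -scalemxAr -scalemxAl.
    have -> : v^T *m (c *m c^T) *m v = (v^T *m c) *m (c^T *m v) by rewrite !mulmxA.
    set P := v^T *m M *m v; set P2 := v^T *m c; set P3 := c^T *m v.
    rewrite !mxE big_ord1 vc -/b expr2.
    by rewrite /b.
  move=> HH; apply: (le_trans HH); rewrite le_eqVlt; apply/orP; left; apply/eqP.
  by field.
have [EN psdN'] := psd_block0 Npsd Ne.
have [Q' EQ'] := IH _ psdN'.
exists (row_mx x (col_mx (0 : 'M_(1, m)) Q')).
rewrite tr_row_mx mul_row_col tr_col_mx trmx0 mul_col_row !mulmx0 !mul0mx.
rewrite -EQ' -EN /N.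
by rewrite addrC subrK.
Qed.
Lemma diag_entry (R : realType) m (A : 'M[R]_m) j :
  A j j = (delta_mx (0 : 'I_1) j *m A *m delta_mx j (0 : 'I_1)) 0 0.
Proof. by rewrite -rowE -colE !mxE. Qed.

Lemma psd_compl (R : realType) m (L G : 'M[R]_m) :
  psd L -> psd G -> frob L G = 0 -> G *m L = 0.
Proof.
move=> hL hG hf.
have [Q EQ] := psd_factor hL.
have [Gs Gp] := hG.
have [Ls _] := hL.
pose v j := Q *m delta_mx j (0 : 'I_1).
have Hv : forall j, (v j)^T *m G *m v j = delta_mx (0 : 'I_1) j *m (Q^T *m G *m Q) *m delta_mx j (0 : 'I_1).
  by move=> j; rewrite /v trmx_mul trmx_delta !mulmxA.
have hs : \sum_j ((v j)^T *m G *m v j) 0 0 = 0.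
  rewrite -[RHS]hf /frob Ls EQ -mulmxA mxtrace_mulC /mxtrace.
  by apply: eq_bigr => j _; rewrite Hv -diag_entry.
have H0 : forall j, G *m v j = 0.
  move=> j; apply: psd_null => //.
  move/eqP: hs; rewrite psumr_eq0 => [/allP H|i _]; last exact: Gp.
  by apply/eqP; apply: H; rewrite mem_index_enum.
have GQ : G *m Q = 0.
  apply/matrixP => i j; rewrite [RHS]mxE.
  have := congr1 (fun M : 'cV[R]_m => M i (0 : 'I_1)) (H0 j); rewrite /v mulmxA -colE mxE /=.
  by rewrite [RHS]mxE.
by rewrite EQ mulmxA GQ mul0mx.
Qed.
Definition leibniz (S : comNzRingType) (d : S -> S) := forall x y, d (x * y) = d x * y + x * d y.

Lemma der_mulmx (S : comNzRingType) (d : {additive S -> S}) (hd : leibniz d) a b c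
  (A : 'M[S]_(a, b)) (B : 'M[S]_(b, c)) :
  map_mx d (A *m B) = map_mx d A *m B + A *m map_mx d B.
Proof.
apply/matrixP => i j; rewrite !mxE raddf_sum -big_split /=.
by apply: eq_bigr => l _; rewrite hd !mxE.
Qed.

Lemma der_scale (S : comNzRingType) (d : {additive S -> S}) (hd : leibniz d) a b
  (x : S) (A : 'M[S]_(a, b)) :
  map_mx d (x *: A) = d x *: A + x *: map_mx d A.
Proof. by apply/matrixP => i j; rewrite !mxE hd. Qed.

Lemma der_scalar (S : comNzRingType) (d : {additive S -> S}) a (x : S) :
  map_mx d (x%:M : 'M[S]_a) = (d x)%:M.
Proof. by apply/matrixP => i j; rewrite !mxE raddfMn. Qed.
Definition Wmx (S : comNzRingType) r k (Gp : 'M[S]_(r + k)) : 'M[S]_(r + k, k) :=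
  col_mx (- (\adj (ulsubmx Gp) *m ursubmx Gp)) ((\det (ulsubmx Gp))%:M).
Definition Umx (S : comNzRingType) r k (Gp : 'M[S]_(r + k)) : 'M[S]_k :=
  \det (ulsubmx Gp) *: drsubmx Gp - (ursubmx Gp)^T *m \adj (ulsubmx Gp) *m ursubmx Gp.

Lemma GW_eq (S : comNzRingType) r k (Gp : 'M[S]_(r + k)) : Gp^T = Gp ->
  Gp *m Wmx Gp = col_mx 0 (Umx Gp).
Proof.
move=> Gs.
have dl : dlsubmx Gp = (ursubmx Gp)^T by rewrite trmx_ursub Gs.
rewrite /Wmx /Umx; set A := ulsubmx Gp; set B := ursubmx Gp; set C := drsubmx Gp.
rewrite -{1}(submxK Gp) mul_block_col dl -/A -/B -/C.
rewrite !mulmxN mulmxA mul_mx_adj mul_scalar_mx mul_mx_scalar addNr.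
by rewrite mul_mx_scalar mulmxA addrC.
Qed.

Lemma WGW_eq (S : comNzRingType) r k (Gp : 'M[S]_(r + k)) : Gp^T = Gp ->
  (Wmx Gp)^T *m (Gp *m Wmx Gp) = \det (ulsubmx Gp) *: Umx Gp.
Proof.
move=> Gs; rewrite GW_eq // /Wmx tr_col_mx mul_row_col mulmx0 add0r.
by rewrite tr_scalar_mx mul_scalar_mx.
Qed.

Lemma Tmx_eq (R : realType) n r k (s : 'S_(r + k)) (G : 'M[{mpoly R[n]}]_(r + k)) :
  Tmx s G = \det (ulsubmx (symperm s G)) *: Umx (symperm s G).
Proof. by rewrite /Tmx /Umx scalerBr scalerA -expr2 scalemxAl scalemxAl. Qed.
Lemma ev_GW0 (S : comNzRingType) (K : fieldType) (ev : {rmorphism S -> K}) r k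
  (Gp : 'M[S]_(r + k)) :
  Gp^T = Gp -> map_mx ev (Umx Gp) = 0 ->
  map_mx ev Gp *m map_mx ev (Wmx Gp) = 0.
Proof.
move=> Gs U0; rewrite -map_mxM GW_eq // map_col_mx U0 map_mx0.
by rewrite col_mx0.
Qed.

Lemma ev_DT (S : comNzRingType) (K : fieldType) (ev : {rmorphism S -> K})
  (d : {additive S -> S}) (hd : leibniz d) r k (Gp : 'M[S]_(r + k)) :
  Gp^T = Gp -> map_mx ev (Umx Gp) = 0 ->
  map_mx ev (map_mx d (\det (ulsubmx Gp) *: Umx Gp)) =
  (map_mx ev (Wmx Gp))^T *m map_mx ev (map_mx d Gp) *m map_mx ev (Wmx Gp).
Proof.
move=> Gs U0; have GW0 := ev_GW0 Gs U0.
have WG : map_mx ev (Wmx Gp)^T *m map_mx ev Gp = 0.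
  rewrite -map_mxM.
  have -> : (Wmx Gp)^T *m Gp = (Gp *m Wmx Gp)^T by rewrite trmx_mul Gs.
  by rewrite -map_trmx map_mxM GW0 trmx0.
rewrite -WGW_eq // der_mulmx // der_mulmx // !(map_mxD, map_mxM).
rewrite GW0 mulmx0 add0r mulmxDr !mulmxA WG mul0mx addr0.
by rewrite map_trmx.
Qed.

Lemma ev_DY (S : comNzRingType) (K : fieldType) (ev : {rmorphism S -> K})
  (d : {additive S -> S}) (hd : leibniz d) r k (Gp : 'M[S]_(r + k)) :
  Gp^T = Gp -> map_mx ev (Umx Gp) = 0 -> ev (\det (ulsubmx Gp)) != 0 ->
  map_mx ev (map_mx d (\det (ulsubmx Gp) *: Umx Gp)) = 0 ->
  map_mx ev (map_mx d (Gp *m Wmx Gp)) = 0.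
Proof.
move=> Gs U0 p0 DT0.
move: DT0; rewrite der_scale // map_mxD !map_mxZ U0 scaler0 add0r => /eqP.
rewrite scalemx_eq0 (negPf p0) /= => /eqP DU0.
rewrite GW_eq // map_col_mx map_col_mx DU0.
have -> : map_mx d (0 : 'M[S]_(r, k)) = 0 by apply/matrixP => i j; rewrite !mxE raddf0.
by rewrite map_mx0 col_mx0.
Qed.
Lemma der2_mulmx (S : comNzRingType) (d : {additive S -> S}) (hd : leibniz d) a b c
  (A : 'M[S]_(a, b)) (B : 'M[S]_(b, c)) :
  map_mx d (map_mx d (A *m B)) = map_mx d (map_mx d A) *m B
    + 2%:R *: (map_mx d A *m map_mx d B) + A *m map_mx d (map_mx d B).
Proof.
rewrite der_mulmx // map_mxD !der_mulmx //.
by rewrite scaler_nat mulr2n !addrA.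
Qed.

Lemma ev_DDT (S : comNzRingType) (K : fieldType) (ev : {rmorphism S -> K})
  (d : {additive S -> S}) (hd : leibniz d) r k (Gp : 'M[S]_(r + k)) :
  Gp^T = Gp -> map_mx ev (Umx Gp) = 0 -> ev (\det (ulsubmx Gp)) != 0 ->
  map_mx ev (map_mx d (\det (ulsubmx Gp) *: Umx Gp)) = 0 ->
  map_mx ev (map_mx d (map_mx d (\det (ulsubmx Gp) *: Umx Gp))) =
  (map_mx ev (Wmx Gp))^T *m map_mx ev (map_mx d (map_mx d Gp)) *m map_mx ev (Wmx Gp)
  + 2%:R *: ((map_mx ev (Wmx Gp))^T *m map_mx ev (map_mx d Gp)
             *m map_mx ev (map_mx d (Wmx Gp))).
Proof.
move=> Gs U0 p0 DT0.
have GW0 := ev_GW0 Gs U0.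
have DY0 := ev_DY hd Gs U0 p0 DT0.
have WG : map_mx ev (Wmx Gp)^T *m map_mx ev Gp = 0.
  rewrite -map_mxM.
  have -> : (Wmx Gp)^T *m Gp = (Gp *m Wmx Gp)^T by rewrite trmx_mul Gs.
  by rewrite -map_trmx map_mxM GW0 trmx0.
have Y0 : map_mx ev (Gp *m Wmx Gp) = 0 by rewrite map_mxM GW0.
rewrite -WGW_eq // der2_mulmx //.
set Y := Gp *m Wmx Gp in Y0 DY0 *.
rewrite !map_mxD map_mxZ !map_mxM GW0 DY0.
rewrite mulmx0 add0r mulmx0 scaler0 add0r /Y der2_mulmx //.
rewrite !map_mxD map_mxZ !map_mxM rmorph_nat.
rewrite !mulmxDr !mulmxA WG mul0mx addr0 -scalemxAr mulmxA.
by rewrite map_trmx.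
Qed.
Definition Dh (R : realType) n (h : 'cV[R]_n) (p : {mpoly R[n]}) : {mpoly R[n]} :=
  \sum_i h i 0 *: mderiv i p.

Lemma Dh_is_additive (R : realType) n (h : 'cV[R]_n) : additive (Dh h).
Proof.
move=> p q; rewrite /Dh -sumrB; apply: eq_bigr => i _.
by rewrite mderivB scalerBr.
Qed.

HB.instance Definition _ (R : realType) n (h : 'cV[R]_n) :=
  GRing.isAdditive.Build {mpoly R[n]} {mpoly R[n]} (Dh h) (Dh_is_additive h).

Lemma Dh_leibniz (R : realType) n (h : 'cV[R]_n) : leibniz (Dh h).
Proof.
move=> p q; rewrite /Dh mulr_suml mulr_sumr -big_split /=; apply: eq_bigr => i _.
by rewrite mderivM scalerDr -scalerAl -scalerAr.
Qed.

Lemma mderiv_leibniz (R : realType) n (i : 'I_n) : leibniz (@mderiv n R i).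
Proof. by move=> p q; rewrite mderivM. Qed.

Lemma meval_sum (R : realType) n (u : 'I_n -> R) (I : finType) (F : I -> {mpoly R[n]}) :
  meval u (\sum_i F i) = \sum_i meval u (F i).
Proof. exact: raddf_sum. Qed.

Lemma mderiv_sum (R : realType) n (j : 'I_n) (I : finType) (F : I -> {mpoly R[n]}) :
  mderiv j (\sum_i F i) = \sum_i mderiv j (F i).
Proof. exact: raddf_sum. Qed.

Lemma Dmx_ev (R : realType) n p (F : 'M[{mpoly R[n]}]_p) (u : 'I_n -> R) (h : 'cV[R]_n) :
  Dmx F u h = map_mx (meval u) (map_mx (Dh h) F).
Proof.
apply/matrixP => a b; rewrite /Dmx summxE !mxE /Dh meval_sum.
by apply: eq_bigr => i _; rewrite !mxE mevalZ.
Qed.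

Lemma ev_DDh (R : realType) n p (F : 'M[{mpoly R[n]}]_p) (u : 'I_n -> R) (h : 'cV[R]_n) :
  map_mx (meval u) (map_mx (Dh h) (map_mx (Dh h) F)) =
  \sum_i \sum_j (h i 0 * h j 0) *: evalmx u (dmx j (dmx i F)).
Proof.
apply/matrixP => a b; rewrite summxE !mxE /Dh meval_sum.
under [RHS]eq_bigr => i _ do rewrite summxE.
rewrite [RHS]exchange_big /=; apply: eq_bigr => j _.
rewrite mevalZ mderiv_sum meval_sum mulr_sumr; apply: eq_bigr => i _.
by rewrite !mxE mderivZ mevalZ mulrA [h j 0 * _]mulrC.
Qed.

Lemma qform_mx (R : realType) n (h : 'cV[R]_n) (F : 'I_n -> 'I_n -> R) :
  (h^T *m (\matrix_(i, j) F i j) *m h) 0 0 = \sum_i \sum_j h i 0 * h j 0 * F i j.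
Proof.
rewrite mxE; under eq_bigr => j _ do rewrite mxE mulr_suml.
rewrite exchange_big /=; apply: eq_bigr => i _; apply: eq_bigr => j _.
by rewrite !mxE; ring.
Qed.
Lemma symperm_map (R : realType) n m (s : 'S_m) (G : 'M[{mpoly R[n]}]_m)
  (g : {mpoly R[n]} -> R) :
  map_mx g (symperm s G) = perm_mx s *m map_mx g G *m (perm_mx s)^T.
Proof.
rewrite tr_perm_mx -row_permE -col_permE; apply/matrixP => i j; by rewrite !mxE.
Qed.

Lemma symperm_der (R : realType) n m (s : 'S_m) (G : 'M[{mpoly R[n]}]_m)
  (g : {mpoly R[n]} -> {mpoly R[n]}) :
  map_mx g (symperm s G) = symperm s (map_mx g G).
Proof. by apply/matrixP => i j; rewrite !mxE. Qed.

Lemma symperm_tr (R : realType) n m (s : 'S_m) (G : 'M[{mpoly R[n]}]_m) :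
  G^T = G -> (symperm s G)^T = symperm s G.
Proof.
move=> Gs; apply/matrixP => i j; rewrite !mxE.
by have := congr1 (fun M : 'M[{mpoly R[n]}]_m => M (s i) (s j)) Gs; rewrite mxE => ->.
Qed.

Lemma perm_mxTK (K : fieldType) m (s : 'S_m) : (perm_mx s)^T *m perm_mx s = 1%:M :> 'M[K]_m.
Proof. by rewrite tr_perm_mx -perm_mxM mulVg perm_mx1. Qed.

Lemma perm_mxKT (K : fieldType) m (s : 'S_m) : perm_mx s *m (perm_mx s)^T = 1%:M :> 'M[K]_m.
Proof. by rewrite tr_perm_mx -perm_mxM mulgV perm_mx1. Qed.

Lemma lsub_rank (K : fieldType) a b c (X : 'M[K]_(a, b + c)) : (\rank (lsubmx X) <= \rank X)%N.
Proof.
have -> : lsubmx X = X *m col_mx 1%:M 0.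
  by rewrite -[X in RHS]hsubmxK mul_row_col mulmx1 mulmx0 addr0.
exact: mxrankM_maxl.
Qed.

Lemma schur_zero (K : fieldType) r k (M : 'M[K]_(r + k)) :
  M^T = M -> \rank M = r -> ulsubmx M \in unitmx ->
  \det (ulsubmx M) *: drsubmx M - (ursubmx M)^T *m \adj (ulsubmx M) *m ursubmx M = 0.
Proof.
move=> Ms rM uA.
have rA : \rank (ulsubmx M) = r by rewrite mxrank_unit.
have us : (usubmx M <= M)%MS.
  have -> : usubmx M = row_mx 1%:M 0 *m M.
    by rewrite -[M in RHS]vsubmxK mul_row_col mul1mx mul0mx addr0.
  exact: submxMl.
have ds : (dsubmx M <= M)%MS.
  have -> : dsubmx M = row_mx 0 1%:M *m M.
    by rewrite -[M in RHS]vsubmxK mul_row_col mul1mx mul0mx add0r.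
  exact: submxMl.
have rU : \rank (usubmx M) = r.
  apply/eqP; rewrite eqn_leq; apply/andP; split.
    by apply: leq_trans (mxrankS us) _; rewrite rM.
  by rewrite -[X in (X <= _)%N]rA lsub_rank.
have MU : (M <= usubmx M)%MS.
  by rewrite -(mxrank_leqif_sup us).2 rU rM.
have /submxP [Z EZ] := submx_trans ds MU.
have dl : dlsubmx M = Z *m ulsubmx M by rewrite /dlsubmx EZ mulmx_lsub.
have dr : drsubmx M = Z *m ursubmx M by rewrite /drsubmx EZ mulmx_rsub.
have dlT : (ursubmx M)^T = dlsubmx M by rewrite trmx_ursub Ms.
rewrite dlT dl dr -(mulmxA Z) mul_mx_adj mul_mx_scalar -scalemxAl.
by rewrite subrr.
Qed.
Lemma rank_conj (K : fieldType) m (P X : 'M[K]_m) :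
  P^T *m P = 1%:M -> P *m P^T = 1%:M -> \rank (P *m X *m P^T) = \rank X.
Proof.
move=> h1 h2; apply/eqP; rewrite eqn_leq; apply/andP; split.
  by have := leq_trans (mxrankM_maxl (P *m X) P^T) (mxrankM_maxr P X).
have H := leq_trans (mxrankM_maxl (P^T *m (P *m X *m P^T)) P) (mxrankM_maxr P^T (P *m X *m P^T)).
by move: H; rewrite !mulmxA h1 mul1mx -mulmxA h1 mulmx1.
Qed.
Lemma qfD (R : realType) n (h : 'cV[R]_n) (A B : 'M[R]_n) :
  (h^T *m (A + B) *m h) 0 0 = (h^T *m A *m h) 0 0 + (h^T *m B *m h) 0 0.
Proof. by rewrite mulmxDr mulmxDl mxE. Qed.

Lemma qfB (R : realType) n (h : 'cV[R]_n) (A B : 'M[R]_n) :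
  (h^T *m (A - B) *m h) 0 0 = (h^T *m A *m h) 0 0 - (h^T *m B *m h) 0 0.
Proof. by rewrite mulmxBr mulmxBl mxE [in X in _ + X = _]mxE. Qed.

Lemma qf_hess2 (R : realType) n p (X : 'M[{mpoly R[n]}]_p) (u : 'I_n -> R)
  (h : 'cV[R]_n) (Q : 'M[R]_p) :
  (h^T *m (\matrix_(i, j) frob Q (evalmx u (dmx j (dmx i X)))) *m h) 0 0
  = frob Q (map_mx (meval u) (map_mx (Dh h) (map_mx (Dh h) X))).
Proof.
rewrite qform_mx ev_DDh frob_sumr; apply: eq_bigr => i _.
by rewrite frob_sumr; apply: eq_bigr => j _; rewrite frobZr.
Qed.

Lemma qf_Hterm (R : realType) n p (X : 'M[{mpoly R[n]}]_p) (u : 'I_n -> R)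
  (h : 'cV[R]_n) (Q Gd : 'M[R]_p) :
  (h^T *m Hterm X u Q Gd *m h) 0 0 = 2 * frob Q (Dmx X u h *m Gd *m Dmx X u h).
Proof.
rewrite /Hterm qform_mx /Dmx mulmx_suml mulmx_suml (frob_sumr Q) mulr_sumr.
apply: eq_bigr => i _.
rewrite -!scalemxAl frobZr mulmx_sumr (frob_sumr Q) !mulr_sumr.
apply: eq_bigr => j _; rewrite -scalemxAr frobZr; ring.
Qed.

Lemma Dmx_sandwich (R : realType) n p d (X : 'M[{mpoly R[n]}]_p) (u : 'I_n -> R)
  (h : 'cV[R]_n) (E : 'M[R]_(p, d)) :
  \sum_i h i 0 *: (E^T *m evalmx u (dmx i X) *m E) = E^T *m Dmx X u h *m E.
Proof.
rewrite /Dmx mulmx_sumr mulmx_suml; apply: eq_bigr => i _.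
by rewrite -scalemxAr -scalemxAl.
Qed.
Theorem proposition4p2 (R : realType) (n r k : nat)
  (f : {mpoly R[n]}) (G : 'M[{mpoly R[n]}]_(r + k)) (u : 'I_n -> R)
  (s : 'S_(r + k)) (d : nat) (E : 'M[R]_(r + k, d)) :
  trmx G = G ->
  is_minimizer f G u ->
  ker_basis (evalmx u G) E ->
  \rank (evalmx u G) = r ->
  \rank (evalmx u (ulsubmx (symperm s G))) = r ->
  nondegeneracy_cond G u E ->
  (exists (Lam Gdag : 'M[R]_(r + k)),
      [/\ KKT f G u Lam, strict_compl G u Lam,
          is_MP_inverse (evalmx u G) Gdag & SOSC f G u Lam E Gdag]) ->
  let T := Tmx s G in
  exists Theta : 'M[R]_k,
    [/\ trmx Theta = Theta,
        grad f u - Dmx_adj T u Theta = 0,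
        psd Theta, psd (evalmx u T) &
        frob Theta (evalmx u T) = 0] /\
    [/\ (forall Y : 'M[R]_k, trmx Y = Y -> Dmx_adj T u Y = 0 -> Y = 0),
        pd Theta &
        (forall h : 'cV[R]_n, h != 0 -> Dmx T u h = 0 ->
           0 < (trmx h *m hessL f T u Theta *m h) 0 0)].
Proof.
move=> Gs _ [Efree Eker] rkG rkA nondeg [Lam [Gd [[LamT KKTg Lpsd Gpsd cmp] sc MP sosc]]] T.
set Gp := symperm s G.
have Gps : Gp^T = Gp := symperm_tr s Gs.
set P : 'M[R]_(r + k) := perm_mx s.
have PTP : P^T *m P = 1%:M := perm_mxTK _ s.
have PPT : P *m P^T = 1%:M := perm_mxKT _ s.
set G0 := evalmx u G.
have G0s : G0^T = G0 by rewrite /G0 /evalmx map_trmx Gs.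
have hP : forall X, map_mx (meval u) (symperm s X) = P *m map_mx (meval u) X *m P^T.
  by move=> X; apply: symperm_map.
have hGp : map_mx (meval u) Gp = P *m G0 *m P^T by apply: hP.
have Gp0s : (map_mx (meval u) Gp)^T = map_mx (meval u) Gp by rewrite map_trmx Gps.
have uA : ulsubmx (map_mx (meval u) Gp) \in unitmx.
  by rewrite -row_free_unit /row_free -map_ulsubmx rkA.
have p0 : meval u (\det (ulsubmx Gp)) != 0.
  by rewrite -det_map_mx map_ulsubmx -unitfE -unitmxE.
have rkM : \rank (map_mx (meval u) Gp) = r by rewrite hGp rank_conj.
have U0 : map_mx (meval u) (Umx Gp) = 0.
  rewrite /Umx map_mxB map_mxZ !map_mxM -map_trmx map_mx_adj -det_map_mx.
  rewrite map_ulsubmx map_ursubmx map_drsubmx.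
  by apply: schur_zero.
set W0 := map_mx (meval u) (Wmx Gp).
have [V VE] : exists V, V = P^T *m W0 by eexists.
have GW0 : map_mx (meval u) Gp *m W0 = 0 := ev_GW0 Gps U0.
have GV : G0 *m V = 0.
  have -> : G0 *m V = P^T *m (map_mx (meval u) Gp *m W0).
    by rewrite hGp VE !mulmxA PTP mul1mx.
  by rewrite GW0 mulmx0.
set p0v := meval u (\det (ulsubmx Gp)).
have [L LV] : exists L : 'M[R]_(k, r + k), L *m V = 1%:M.
  exists (row_mx (0 : 'M_(k, r)) (p0v^-1)%:M *m P).
  rewrite VE -mulmxA (mulmxA P) PPT mul1mx /W0 /Wmx map_col_mx map_scalar_mx.
  by rewrite mul_row_col mul0mx add0r -scalar_mxM mulVf.
set K := kermx G0^T.
have rK : \rank K = k by rewrite mxrank_ker mxrank_tr rkG addKn.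
have rV : \rank V^T = k.
  apply/eqP; rewrite mxrank_tr eqn_leq rank_leq_col /=.
  by rewrite -{1}(mxrank1 R k) -LV mxrankM_maxr.
have VK : (V^T <= K)%MS by rewrite sub_kermx -trmx_mul GV trmx0.
have KV : (K <= V^T)%MS by rewrite -(mxrank_leqif_sup VK).2 rK rV.
have kerP : forall a (X : 'M[R]_(a, r + k)), X *m G0 = 0 -> exists Z, X = Z *m V^T.
  move=> a X XG; apply/submxP; apply: submx_trans KV.
  by rewrite sub_kermx G0s XG.
move/andP: Eker => [EK KE].
have [ZE EZ] : exists ZE, E = V *m ZE.
  have /submxP [Z EZ0] := submx_trans EK KV.
  by exists Z^T; rewrite -[E]trmxK EZ0 trmx_mul trmxK.
have [ZV VZ] : exists ZV, V = E *m ZV.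
  have /submxP [Z EZ0] := submx_trans VK KE.
  by exists Z^T; rewrite -[V]trmxK EZ0 trmx_mul trmxK.
have GL0 : G0 *m Lam = 0 := psd_compl Lpsd Gpsd cmp.
have [Theta ThE] : exists Theta, Theta = L *m Lam *m L^T by eexists.
have LamV : Lam = V *m Theta *m V^T.
  have [Z LZ] : exists Z, Lam = Z *m V^T.
    by apply: kerP; rewrite -[Lam]LamT -G0s -trmx_mul GL0 trmx0.
  have LZ' : Lam = V *m Z^T by rewrite -LamT LZ trmx_mul trmxK.
  have VLL : V *m L *m Lam = Lam by rewrite [in LHS]LZ' mulmxA -(mulmxA V) LV mulmx1 -LZ'.
  rewrite ThE !mulmxA VLL.
  by rewrite -{1}LamT -{1}VLL !trmx_mul LamT !mulmxA.
have hcV : forall X, W0^T *m map_mx (meval u) (symperm s X) *m W0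
                    = V^T *m map_mx (meval u) X *m V.
  by move=> X; rewrite hP VE trmx_mul trmxK !mulmxA.
have TE : T = \det (ulsubmx Gp) *: Umx Gp := Tmx_eq s G.
have DTi : forall i, evalmx u (dmx i T) = V^T *m evalmx u (dmx i G) *m V.
  move=> i; rewrite /evalmx /dmx TE (ev_DT (mderiv_leibniz i) Gps U0).
  by rewrite symperm_der hcV.
have frobV : forall X Y, frob (V^T *m X *m V) Y = frob X (V *m Y *m V^T).
  by move=> X Y; apply: frob_congr.
have ThT : Theta^T = Theta by rewrite ThE !trmx_mul trmxK LamT mulmxA.
have adjT : Dmx_adj T u Theta = Dmx_adj G u Lam.
  apply/matrixP => i j; rewrite !mxE DTi frobV -LamV.
  by [].
have ThPsd : psd Theta.
  split => // v; rewrite ThE.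
  have := (Lpsd.2 (L^T *m v)).
  by rewrite trmx_mul trmxK !mulmxA.
have evT0 : evalmx u T = 0.
  by rewrite TE /evalmx map_mxZ U0 scaler0.
exists Theta; split.
  split => //.
  - by rewrite adjT.
  - by rewrite evT0; split; [rewrite trmx0 | move=> v; rewrite mulmx0 mul0mx mxE].
  - by rewrite evT0 frob0r.
split.
- move=> Y YT adj0.
  have [Z ZE0] : exists Z, Z = V *m Y *m V^T by eexists.
  have hY : forall i, frob (evalmx u (dmx i G)) Z = 0.
    move=> i; have := congr1 (fun M : 'cV[R]_n => M i 0) adj0.
    by rewrite !mxE DTi frobV -ZE0.
  have ZT : Z^T = Z by rewrite ZE0 !trmx_mul trmxK YT mulmxA.
  have [dd [N [NT EN ZEq]]] := nondeg Z ZT.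
  have VNV : V^T *m N *m V = 0.
    have -> : V^T *m N *m V = ZV^T *m (E^T *m N *m E) *m ZV.
      by rewrite VZ trmx_mul !mulmxA.
    by rewrite EN mulmx0 mul0mx.
  have ZZ : frob Z Z = 0.
    rewrite {2}ZEq frobDr /Dmx (frob_sumr Z) big1 ?add0r.
      by rewrite frobC ZE0 -frobV VNV frobC frob0r.
    by move=> i _; rewrite frobZr frobC hY mulr0.
  have Z0 := frob_self0 ZZ.
  have : L *m Z *m L^T = Y.
    by rewrite ZE0 !mulmxA LV mul1mx -mulmxA -trmx_mul LV trmx1 mulmx1.
  by rewrite Z0 mulmx0 mul0mx.
- have rL : \rank Lam = k.
    by move: sc; rewrite /strict_compl rkG => /eqP; rewrite eqn_add2l => /eqP.
  have uTh : Theta \in unitmx.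
    rewrite -row_free_unit /row_free eqn_leq rank_leq_row /= -{1}rL LamV.
    exact: leq_trans (mxrankM_maxl (V *m Theta) V^T) (mxrankM_maxr V Theta).
  split => // v vnz.
  rewrite lt_def (ThPsd.2 v) andbT; apply/negP => /eqP h0.
  have Tv0 := psd_null ThPsd h0.
  have : v = invmx Theta *m (Theta *m v) by rewrite mulKmx.
  by rewrite Tv0 mulmx0 => v0; rewrite v0 eqxx in vnz.
- move=> h hnz DTh0.
  have hd := Dh_leibniz h.
  have DT0 : map_mx (meval u) (map_mx (Dh h) (\det (ulsubmx Gp) *: Umx Gp)) = 0.
    by rewrite -TE -Dmx_ev.
  have [DG DGe] : exists DG, DG = Dmx G u h by eexists.
  have DGe' : DG = map_mx (meval u) (map_mx (Dh h) G) by rewrite DGe Dmx_ev.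
  have DGs : DG^T = DG by rewrite DGe' !map_trmx Gs.
  have [Q QE] : exists Q, Q = P^T *m map_mx (meval u) (map_mx (Dh h) (Wmx Gp)) by eexists.
  have E3 : DG *m V + G0 *m Q = 0.
    have -> : DG *m V + G0 *m Q
        = P^T *m map_mx (meval u) (map_mx (Dh h) (Gp *m Wmx Gp)).
      rewrite der_mulmx // map_mxD !map_mxM symperm_der hP hGp DGe' VE QE.
      by rewrite mulmxDr !mulmxA PTP !mul1mx.
    by rewrite (ev_DY hd Gps U0 p0 DT0) mulmx0.
  have DV : DG *m V = - (G0 *m Q).
    by apply/eqP; rewrite -subr_eq0 opprK E3.
  have VD : V^T *m DG = - (Q^T *m G0).
    by rewrite -DGs -trmx_mul DV raddfN /= trmx_mul G0s.
  have D2 : map_mx (meval u) (map_mx (Dh h) (map_mx (Dh h) T))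
      = V^T *m map_mx (meval u) (map_mx (Dh h) (map_mx (Dh h) G)) *m V
        - 2%:R *: (Q^T *m G0 *m Q).
    have mid : W0^T *m map_mx (meval u) (symperm s (map_mx (Dh h) G))
        *m map_mx (meval u) (map_mx (Dh h) (Wmx Gp)) = V^T *m DG *m Q.
      by rewrite hP VE QE DGe' trmx_mul trmxK !mulmxA.
    rewrite TE (ev_DDT hd Gps U0 p0 DT0) !symperm_der hcV mid VD.
    by rewrite mulNmx scalerN.
  have VDV : V^T *m DG *m V = 0.
    by rewrite DGe' -hcV -symperm_der -(ev_DT hd Gps U0) DT0.
  have crit : \sum_i h i 0 *: (E^T *m evalmx u (dmx i G) *m E) = 0.
    rewrite Dmx_sandwich -DGe EZ.
    have -> : (V *m ZE)^T *m DG *m (V *m ZE) = ZE^T *m (V^T *m DG *m V) *m ZE.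
      by rewrite trmx_mul !mulmxA.
    by rewrite VDV mulmx0 mul0mx.
  have S := sosc h hnz crit.
  case: MP => MP1 _ _ _.
  have MP1' : G0 *m (Gd *m (G0 *m Q)) = G0 *m Q by rewrite !mulmxA MP1.
  set D2G := map_mx (meval u) (map_mx (Dh h) (map_mx (Dh h) G)) in D2 *.
  have f1 : frob Theta (V^T *m D2G *m V) = frob Lam D2G.
    by rewrite frobC frobV -LamV frobC.
  have f2 : frob Lam (DG *m Gd *m DG) = frob Theta (Q^T *m G0 *m Q).
    rewrite frobC LamV -frobV frobC.
    have -> : V^T *m (DG *m Gd *m DG) *m V = (V^T *m DG) *m Gd *m (DG *m V).
      by rewrite !mulmxA.
    by rewrite VD DV !mulNmx !mulmxN opprK -!mulmxA MP1'.
  move: S; rewrite /hessL qfD !qfB !qf_hess2 qf_Hterm -DGe D2.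
  rewrite frobDr frobNr frobZr f1 f2.
  move=> S; lra.
Qed.
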